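(* Fix $\delta>0$, $\epsilon>0$, and an integer $L\geq 2$. A learner strategy $\phi\in\Phi_N$ is $(\epsilon,\delta,L)$-secure if and only if it is $(\epsilon,\delta,L)$-private.
   Context: Setting: a learner wants to determine a true value $v^*\in[0,1)$. At step $k$ she submits a query $q_k\in[0,1)$ and receives the response $r_k=\mathbb{I}(v^*\geq q_k)$. A learner strategy $\phi$ of length $N$ uses a random seed $Y$, uniform on $\{1,2,\dots,\mathcal{Y}\}$, and consists of query functions $q_1=\phi_1(Y)$ and $q_k=\phi_k(r_1,\dots,r_{k-1},Y)$ for $k=2,\dots,N$, together with an estimation function $\hat{x}=\phi^E(r_1,\dots,r_N,Y)$. $\Phi_N$ denotes the set of all learner strategies of length $N$. An adversary observes the queries (but not the responses) and knows the strategy $\phi$, including the distribution of $Y$. For $x\in[0,1)$, $\mathcal{Q}(x)$ is the set of query sequences $\overline{q}\in[0,1)^N$ that occur with positive probability (over $Y$) when $v^*=x$, and $\mathcal{Q}=\bigcup_{x\in[0,1)}\mathcal{Q}(x)$. The adversary's information set is $\mathcal{I}(\overline{q})=\{x\in[0,1):\overline{q}\in\mathcal{Q}(x)\}$. A collection of $L$ closed intervals $[a_1,b_1],\dots,[a_L,b_L]$ with $b_j-a_j\leq\delta$ for all $j$ and whose union contains a set $\mathcal{E}\subset\mathbb{R}$ is a $(\delta,L)$ cover of $\mathcal{E}$; $\mathcal{E}$ is $(\delta,L)$-coverable if such a cover exists, and the $\delta$-cover number is $C_\delta(\mathcal{E})=\min\{L\in\mathbb{N}:\mathcal{E}\text{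 is }(\delta,L)\text{-coverable}\}$. $\phi$ is $(\epsilon,\delta,L)$-private if (1) accuracy: $\mathbb{P}(|\hat{x}(x,Y)-x|\leq\epsilon/2)=1$ for all $x\in[0,1)$, where $\hat{x}(x,Y)$ is the learner's estimate when $v^*=x$; and (2) privacy: $C_\delta(\mathcal{I}(\overline{q}))\geq L$ for every $x\in[0,1)$ and every $\overline{q}\in\mathcal{Q}(x)$. An adversary estimator $\hat{x}^a$ is a random variable whose value is determined by the observed query sequence $\overline{q}$ together with an independent randomization. It is $(\delta,L)$-correct with respect to $\overline{q}\in\mathcal{Q}$ if $\mathbb{P}(|\hat{x}^a(\overline{q})-x|\leq\delta/2)>1/L$ for all $x\in\mathcal{I}(\overline{q})$ (probability over the estimator's randomization). $\phi$ is $(\epsilon,\delta,L)$-secure if it satisfies the same accuracy constraint (1) and, for every $\overline{q}\in\mathcal{Q}$, there is no adversary estimator that is $(\delta,L)$-correct with respect to $\overline{q}$; i.e., for every $\overline{q}\in\mathcal{Q}$ and every adversary estimator there exists $x\in\mathcal{I}(\overline{q})$ with $\mathbb{P}(|\hat{x}^a(\overline{q})-x|\leq\delta/2)\leq 1/L$. *)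

(* Defs.v *)
From HB Require Import structures.
From mathcomp Require Import all_boot all_order all_algebra.
From mathcomp Require Import all_classical all_reals all_analysis.
Set Implicit Arguments. Unset Strict Implicit. Unset Printing Implicit Defensive.
Import Order.TTheory GRing.Theory Num.Theory.
Local Open Scope classical_set_scope.
Local Open Scope ring_scope.

Definition coverable (R : realType) (delta : R) (L : nat) (E : set R) : Prop :=
  exists a b : nat -> R,
    (forall j, (j < L)%N -> b j - a j <= delta) /\
    (forall x, E x -> exists2 j, (j < L)%N & a j <= x <= b j).

(* C_delta(E) = min { L in N : E is (delta, L)-coverable }
   (an arbitrary value, 0, if no such L exists). *)
Definition cover_number (R : realType) (delta : R) (E : set R) : nat :=
  xget 0%N [set n | coverable delta n E /\
                    (forall m, coverable delta m E -> (n <= m)%N)].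

(* The seed Y is uniform on a set of Ys >= 1 elements, represented by
   'I_Ys (i.e. {0, ..., Ys-1} instead of {1, ..., Ys}).
   The k-th query function phi_k(r_1,...,r_{k-1},Y) is
   [query [:: r_1; ...; r_{k-1}] Y]; the estimation function
   phi^E(r_1,...,r_N,Y) is [estimate [:: r_1; ...; r_N] Y]. *)
Record strategy (R : realType) (N : nat) := Strategy {
  nseeds : nat;
  nseeds_gt0 : (0 < nseeds)%N;
  query : seq bool -> 'I_nseeds -> R;
  query_range : forall rs y, 0 <= query rs y < 1;
  estimate : seq bool -> 'I_nseeds -> R
}.

Section Run.
Variables (R : realType) (N : nat) (phi : strategy R N).

Fixpoint responses (x : R) (y : 'I_(nseeds phi)) (k : nat) : seq bool :=
  match k with
  | 0 => [::]
  | k'.+1 => let rs := responses x y k' in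
             rcons rs (@query R N phi rs y <= x)
  end.

Definition queries (x : R) (y : 'I_(nseeds phi)) : seq R :=
  [seq @query R N phi (responses x y k) y | k <- iota 0 N].

Definition learner_estimate (x : R) (y : 'I_(nseeds phi)) : R :=
  @estimate R N phi (responses x y N) y.

Definition seed_prob (A : {pred 'I_(nseeds phi)}) : R :=
  #|A|%:R / (nseeds phi)%:R.

Definition Qx (x : R) : set (seq R) :=
  [set qs | 0 < seed_prob [pred y | queries x y == qs]].

Definition Qall : set (seq R) :=
  [set qs | exists2 x, 0 <= x < 1 & Qx x qs].

Definition info (qs : seq R) : set R :=
  [set x | 0 <= x < 1 /\ Qx x qs].

Definition accurate (eps : R) : Prop :=
  forall x, 0 <= x < 1 ->
    seed_prob [pred y | `|learner_estimate x y - x| <= eps / 2] = 1.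

End Run.

Definition private (R : realType) (N : nat) (eps delta : R) (L : nat)
    (phi : strategy R N) : Prop :=
  accurate phi eps /\
  forall x, 0 <= x < 1 -> forall qs, Qx phi x qs ->
    (L <= cover_number delta (info phi qs))%N.

(* An adversary estimator for a fixed observed query sequence: a real
   random variable X on an (arbitrary) probability space modelling the
   independent randomization. *)
Definition adversary_correct (R : realType) (N : nat) (delta : R) (L : nat)
    (phi : strategy R N) (qs : seq R)
    (d : measure_display) (Omega : measurableType d)
    (P : probability Omega R) (X : Omega -> R) : Prop :=
  forall x, info phi qs x ->
    lte ((L%:R)^-1)%:E (P [set w | `|X w - x| <= delta / 2]).

Definition secure (R : realType) (N : nat) (eps delta : R) (L : nat)
    (phi : strategy R N) : Prop :=
  accurate phi eps /\
  forall qs, Qall phi qs ->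
    forall (d : measure_display) (Omega : measurableType d)
           (P : probability Omega R) (X : Omega -> R),
      measurable_fun setT X ->
      ~ adversary_correct delta L phi qs P X.

(* Main.v *)
Require Import Defs.
From HB Require Import structures.
From mathcomp Require Import all_boot all_order all_algebra.
From mathcomp Require Import all_classical all_reals all_analysis.
From mathcomp Require Import lra.
Import Order.TTheory GRing.Theory Num.Theory.
Local Open Scope ring_scope.
Local Open Scope classical_set_scope.
Set Implicit Arguments. Unset Strict Implicit.

Definition chain (R : realType) (delta : R) (E : set R) (n : nat) (y : nat -> R) :=
  (forall i, (i <= n)%N -> E (y i)) /\ (forall i, (i < n)%N -> y i + delta < y i.+1).

Lemma chain_cover (R : realType) (delta : R) (hd : 0 < delta) (n : nat) :
  forall E : set R, (forall x, E x -> 0 <= x) ->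
  (forall y, ~ chain delta E n y) -> coverable delta n E.
Proof.
elim: n => [|n IH] E E0 nch.
  exists (fun _ => 0), (fun _ => 0); split => // x Ex.
  by exfalso; apply: (nch (fun _ => x)); split.
have [[x0 Ex0]|nE] := pselect (exists x, E x); last first.
  exists (fun _ => 0), (fun _ => 0); split => [j _|x Ex]; first by rewrite subrr ltW.
  by exfalso; apply: nE; exists x.
have hinf : has_inf E by split; [exists x0 | exists 0 => z /E0].
have hlb : has_lbound E by exists 0 => z /E0.
set m := inf E.
have [a [b [hab hcov]]] : coverable delta n [set x | E x /\ m + delta < x].
  apply: IH; first by move=> x [/E0].
  move=> y [yE ygap].
  have [_ y0] := yE 0%N isT.
  have hpos : 0 < y 0%N - delta - m by rewrite /m; lra.
  have [e Ee ee] := @inf_adherent R E (y 0%N - delta - m) hpos hinf.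
  apply: (nch (fun i => if i is i'.+1 then y i' else e)); split.
    by case=> [|i] //= hi; have [] := yE i hi.
  case=> [|i] /= hi; first by move: ee; rewrite /m; lra.
  exact: ygap.
exists (fun j => if j is j'.+1 then a j' else m), (fun j => if j is j'.+1 then b j' else m + delta).
split.
  by case=> [|j] /= hj; [rewrite addrC addKr | exact: hab].
move=> x Ex.
have [xle|xgt] := leP x (m + delta).
  by exists 0%N => //; rewrite xle andbT /m; exact: ge_inf.
have [j hj hx] := hcov x (conj Ex xgt).
by exists j.+1.
Qed.

Lemma cover_number_min (R : realType) (delta : R) (E : set R) m :
  coverable delta m E ->
  coverable delta (cover_number delta E) E /\ (cover_number delta E <= m)%N.
Proof.
move=> cm.
have ex : exists n, (fun n => `[< coverable delta n E >]) n by exists m; apply/asboolP.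
case: (ex_minnP ex) => k /asboolP ck kmin.
have := @xgetPex _ 0%N [set n | coverable delta n E /\
                    (forall m, coverable delta m E -> (n <= m)%N)] (ex_intro _ k (conj ck (fun m' cm' => kmin m' (asboolT cm')))).
rewrite /cover_number => -[c1 c2]; split => //.
exact: c2.
Qed.

Lemma chain_sep (R : realType) (delta : R) (hd : 0 < delta) E n y :
  chain delta E n y -> forall i j, (i < j)%N -> (j <= n)%N -> y i + delta < y j.
Proof.
move=> [_ g] i; elim=> [//|j IH] hij hjn.
have := g j hjn.
rewrite ltnS leq_eqVlt in hij; case/orP: hij => [/eqP <- //|hij] gj.
have := IH hij (ltnW hjn); lra.
Qed.

Lemma coverable_exists (R : realType) (delta : R) (hd : 0 < delta) (E : set R) :
  (forall x, E x -> 0 <= x < 1) -> exists n, coverable delta n E.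
Proof.
move=> E01.
have h0 : 0 <= delta^-1 by rewrite invr_ge0 ltW.
set n := Num.Def.archi_bound delta^-1.
have hn : delta^-1 < n%:R := archi_boundP h0.
exists n; apply: chain_cover => // [x /E01 /andP[] //|y hy].
have hn' : 1 < n%:R * delta.
  by rewrite -(ltr_pM2r hd) mulVf ?gt_eqF // in hn.
have key : forall i, (i <= n)%N -> y 0%N + i%:R * delta <= y i.
  elim=> [|i IH] hi; first by rewrite mul0r addr0.
  have := (proj2 hy) i hi; have := IH (ltnW hi); rewrite -natr1; lra.
have := key n (leqnn n).
have /andP[y00 _] := E01 _ ((proj1 hy) 0%N isT).
have /andP[_ yn1] := E01 _ ((proj1 hy) n (leqnn n)).
lra.
Qed.

Lemma mnormalizeE d (T : measurableType d) (R : realType)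
  (mu : {measure set T -> \bar R}) (P : probability T R) (k : R) :
  0 < k -> mu setT = k%:E -> forall A, mnormalize mu P A = (mu A * (k^-1)%:E)%E.
Proof.
move=> k0 muT A; rewrite /mnormalize muT /= eqe gt_eqF //=.
Qed.

Theorem proposition2 (R : realType) (delta eps : R) (L N : nat)
  (hdelta : 0 < delta) (heps : 0 < eps) (hL : (2 <= L)%N)
  (phi : strategy R N) :
  secure eps delta L phi <-> private eps delta L phi.
Proof.
have info01 : forall qs z, info phi qs z -> 0 <= z < 1 by move=> qs z [].
have hL0 : (0 < L%:R :> R) by rewrite ltr0n; case: L hL.
split.
- move=> [acc hsec]; split => // x hx qs hQ.
  rewrite leqNgt; apply/negP => hlt.
  set E := info phi qs.
  have Ex : E x by split.
  have [n0 cov0] := coverable_exists hdelta (info01 qs).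
  have [[a [b [hab hcov]]] _] := cover_number_min cov0.
  set k := cover_number delta E.
  have k0 : (0 < k)%N.
    by case: (hcov x Ex) => j hj _; apply: leq_ltn_trans hj.
  pose c j := (a j + b j) / 2.
  pose mu := msum (fun j => (@dirac _ R (c j) R)) k.
  pose Pr := mnormalize mu (@dirac _ R 0 R).
  have QA : Qall phi qs by exists x.
  apply: (hsec qs QA _ R Pr id (@measurable_id _ _ setT)).
  move=> z Ez /=.
  have muT : mu setT = k%:R%:E.
    rewrite /mu /msum /=.
    under eq_bigr do rewrite diracT.
    by rewrite sumEFin sumr_const card_ord.
  have kR : (0 < k%:R :> R) by rewrite ltr0n.
  rewrite /Pr (mnormalizeE _ kR muT).
  have [j hj /andP[ajz zbj]] := hcov z Ez.
  have mu1 : (1 <= mu [set w : R | (`|w - z| <= delta / 2)%R])%E.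
    rewrite /mu /msum /= (bigD1 (Ordinal hj)) //=.
    apply: le_trans (leeDl _ (sume_ge0 _ _)); last by move=> *; exact: measure_ge0.
    rewrite diracE mem_set //= ler_distl /c.
    have := hab j hj; lra.
  apply: (lt_le_trans _ (lee_wpmul2r _ mu1)); last by rewrite lee_fin invr_ge0 ltW.
  rewrite mul1e lte_fin ltf_pV2 ?posrE // ltr_nat //.
- move=> [acc hpriv]; split => // qs [x hx hQ] d O P X mX hcorr.
  have hL' := hpriv x hx qs hQ.
  set E := info phi qs in hL' hcorr.
  have [n hn] : exists n, L = n.+1 by case: (L) hL => // n _; exists n.
  subst L.
  have [y hy] : exists y, chain delta E n y.
    apply: contrapT => H.
    have [cn _] := @cover_number_min R delta E n
      (chain_cover hdelta (fun z Ez => proj1 (andP (info01 qs z Ez))) (fun y hy => H (ex_intro _ y hy))).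
    have := proj2 (cover_number_min (chain_cover hdelta (fun z Ez => proj1 (andP (info01 qs z Ez))) (fun y hy => H (ex_intro _ y hy)))).
    by rewrite leqNgt hL'.
  pose S (i : 'I_n.+1) := [set w | `|X w - y i| <= delta / 2].
  have mS i : measurable (S i).
    have := mX measurableT _ (measurable_itv (`[y i - delta / 2, y i + delta / 2])%R).
    rewrite setTI; congr measurable; apply/seteqP; split => w /=;
      by rewrite /S /= in_itv /= ler_distl.
  have tS : trivIset setT S.
    apply/trivIsetP => i j _ _ nij.
    wlog lij : i j nij / (i < j)%N.
      move=> W; case: (ltngtP i j) => h; [exact: W | rewrite setIC; apply: W => //; rewrite eq_sym //| ].
      by move/val_inj: h => h; rewrite h eqxx in nij.
    have := chain_sep hdelta hy lij (ltn_ord j) => sep.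
    apply/seteqP; split => // w []; rewrite /S /= !ler_distl => /andP[h1 h2] /andP[h3 h4].
    lra.
  have hsum := measure_bigsetU_ord P predT mS tS.
  have hle := @probability_le1 _ _ _ P (\big[setU/set0]_(i < n.+1 | predT i) S i) (bigsetU_measurable _ (fun i _ => mS i)).
  rewrite hsum in hle.
  have fS i : P (S i) = (fine (P (S i)))%:E.
    rewrite fineK // ge0_fin_numE //; apply: (le_lt_trans (probability_le1 P (mS i))).
    exact: ltry.
  have gt i : (n.+1%:R)^-1 < fine (P (S i)).
    by rewrite -lte_fin -fS; apply: hcorr; have [] := hy; move=> hE _; exact: hE (ltn_ord i).
  move: hle; rewrite (eq_bigr _ (fun i _ => fS i)).
  rewrite sumEFin lee_fin leNgt => /negP; apply.
  apply: le_lt_trans (ltr_sum _ (fun i _ => gt i)); last by apply/hasP; exists ord0; rewrite ?mem_index_enum.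
  by rewrite sumr_const card_ord -[X in X *+ _]mulr1 -mulrnAr mulVf ?gt_eqF.
Qed.
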